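(* Let $(V,P)$ be a finite, connected, lazy, reversible Markov chain equipped with the combinatorial distance, and assume every edge has non-negative Ollivier sectional curvature. Then \[ \alpha_{\operatorname{mod}}\ge\inf_{x\sim y}\kappa(x,y). \]
   Context: Lazy means $\sum_yP(x,y)=1$ and $P(x,x)\ge\frac12$; $P$ has symmetric support; $m$ is the probability measure with $m(x)P(x,y)=m(y)P(y,x)$. $x\sim y$ means $x\neq y$ and $P(x,y)>0$; $d$ is the combinatorial (edge-count) distance. $\Delta f(x)=\sum_zP(x,z)(f(z)-f(x))$, $\langle f,g\rangle=\sum f g\, m$, $\mathcal E(f,g)=-\langle\Delta f,g\rangle$. For positive $f$ with $\langle f,1\rangle=1$, $\operatorname{Ent}(f)=\langle f,\log f\rangle$; the modified log-Sobolev constant is $\alpha_{\operatorname{mod}}=\inf\{\mathcal E(f,\log f)/\operatorname{Ent}(f)\}$ over non-constant positive $f$ with $\langle f,1\rangle=1$. Ollivier curvature: $\kappa(x,y)=\inf\{(\Delta f(x)-\Delta f(y))/d(x,y): f\text{ 1-Lipschitz w.r.t. }d,\ f(y)-f(x)=d(x,y)\}$. An edge $x\sim y$ has non-negative Ollivier sectional curvature if there is a coupling $\pi$ of $P(x,\cdot)$ and $P(y,\cdot)$ with $d(x',y')\le1$ whenever $\pi(x',y')>0$. *)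

(* Defs.v *)
From HB Require Import structures.
From mathcomp Require Import all_boot all_order all_algebra.
From mathcomp Require Import all_classical all_reals all_analysis.
Set Implicit Arguments. Unset Strict Implicit. Unset Printing Implicit Defensive.
Import Order.TTheory GRing.Theory Num.Theory.
Local Open Scope ring_scope.
Local Open Scope classical_set_scope.

Section MarkovDefs.
Variables (R : realType) (V : finType) (P : V -> V -> R).

Definition adj : rel V := fun x y => (x != y) && (0 < P x y).

Fixpoint within (k : nat) (x y : V) : bool :=
  match k with
  | 0 => x == y
  | k'.+1 => within k' x y || [exists z, within k' x z && adj z y]
  end.

(* combinatorial (edge-count) graph distance; on a connected graph every
   vertex is reached within #|V| - 1 steps, so the search range suffices *)
Definition dist (x y : V) : nat := find (fun k => within k x y) (iota 0 #|V|).

Definition lap (f : V -> R) (x : V) : R := \sum_(z : V) P x z * (f z - f x).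

Definition lip1 (f : V -> R) : Prop :=
  forall x y, `|f x - f y| <= (dist x y)%:R.

Definition kappa (x y : V) : R :=
  inf [set r : R | exists f : V -> R, lip1 f /\ f y - f x = (dist x y)%:R /\
                      r = (lap f x - lap f y) / (dist x y)%:R].

Variable m : V -> R.

Definition inner (f g : V -> R) : R := \sum_(x : V) f x * g x * m x.
Definition energy (f g : V -> R) : R := - inner (lap f) g.
Definition Ent (f : V -> R) : R := inner f (fun x => ln (f x)).

Definition alpha_mod : R :=
  inf [set r : R | exists f : V -> R, (forall x, 0 < f x) /\
         inner f (fun _ => 1) = 1 /\ (exists x y, f x != f y) /\
         r = energy f (fun x => ln (f x)) / Ent f].

Definition nonneg_sectional (x y : V) : Prop :=
  exists pi : V -> V -> R, (forall a b, 0 <= pi a b) /\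
    (forall a, \sum_(b : V) pi a b = P x a) /\
    (forall b, \sum_(a : V) pi a b = P y b) /\
    (forall a b, 0 < pi a b -> (dist a b <= 1)%N).

End MarkovDefs.

(* Main.v *)
Require Import Defs.
From mathcomp Require Import all_boot all_order all_algebra.
From mathcomp Require Import all_classical all_reals all_analysis.
From mathcomp Require Import ring lra.
Import Order.TTheory GRing.Theory Num.Theory.
Import numFieldNormedType.Exports.
Set Implicit Arguments. Unset Strict Implicit. Unset Printing Implicit Defensive.
Local Open Scope ring_scope.
Local Open Scope classical_set_scope.

Section Comb.
Variables (R : realType) (V : finType) (P : V -> V -> R).
Hypothesis P_symsupp : forall x y, 0 < P x y -> 0 < P y x.
Hypothesis conn : forall x y, connect (adj P) x y.

Lemma adj_sym {x y} : adj P x y -> adj P y x.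
Proof. by rewrite /adj => /andP[xy /P_symsupp ->]; rewrite eq_sym xy. Qed.

Lemma adj_neq {x y} : adj P x y -> x != y.
Proof. by case/andP. Qed.

Section Bound.
Variables (w : V -> R) (L : R).
Hypothesis L0 : 0 <= L.
Hypothesis wL : forall a b, adj P a b -> w b - w a <= L.

Lemma adj_abs {a b} : adj P a b -> `|w a - w b| <= L.
Proof.
move=> ab; rewrite ler_norml; apply/andP; split.
  by rewrite lerNl opprB; apply: wL.
by apply: wL; apply: adj_sym.
Qed.

Lemma within_bound k a b : Defs.within P k a b -> `|w a - w b| <= k%:R * L.
Proof.
elim: k b => [|k IH] b /=.
  by move/eqP->; rewrite subrr normr0 mul0r.
case/orP.
  move/IH => h; apply: (le_trans h); rewrite ler_wpM2r // ler_nat; exact: leqnSn.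
case/existsP => z /andP[/IH az /adj_abs zb].
rewrite -(subrKA (w z)) (le_trans (ler_normD _ _)) // mulrSr mulrDl mul1r.
by apply: lerD.
Qed.

Lemma path_bound {a p} : path (adj P) a p -> `|w a - w (last a p)| <= (size p)%:R * L.
Proof.
elim: p a => [|b p IH] a /=.
  by rewrite subrr normr0 mul0r.
case/andP => /adj_abs ab /IH h.
rewrite -(subrKA (w b)) (le_trans (ler_normD _ _)) // mulrS mulrDl mul1r.
by apply: lerD.
Qed.

Lemma dist_bound a b : `|w a - w b| <= (dist P a b)%:R * L.
Proof.
rewrite /dist; case: (boolP (has (fun k => Defs.within P k a b) (iota 0 #|V|))) => H.
  have := nth_find 0%N H; rewrite nth_iota ?add0n; last by move: H; rewrite has_find size_iota.
  exact: within_bound.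
rewrite hasNfind // size_iota.
have /connectP[p pth ->] := conn a b.
case: (shortenP pth) => p' pth' u' _.
have h := path_bound pth'. apply: (le_trans h); rewrite ler_wpM2r // ler_nat.
have := max_card (mem (a :: p')); rewrite (card_uniqP u') /=.
exact: ltnW.
Qed.
End Bound.

Lemma dist_adj x y : adj P x y -> dist P x y = 1%N.
Proof.
move=> xy; have : (1 < #|V|)%N.
  have := max_card (mem [:: x; y]); rewrite (card_uniqP _) //=.
  by rewrite inE (adj_neq xy).
rewrite /dist; case: #|V| => [|[|n]] //= _.
rewrite (negbTE (adj_neq xy)) /=.
suff -> : [exists z, (x == z) && adj P z y] by [].
by apply/existsP; exists x; rewrite eqxx.
Qed.

Lemma dist_le_card a b : (dist P a b <= #|V|)%N.
Proof. by rewrite /dist -{2}(size_iota 0 #|V|) find_size. Qed.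

Lemma dist_le1 a b : (dist P a b <= 1)%N -> a = b \/ adj P a b.
Proof.
rewrite /dist; case: (boolP (has (fun k => Defs.within P k a b) (iota 0 #|V|))) => H.
  have := nth_find 0%N H; rewrite nth_iota ?add0n; last by move: H; rewrite has_find size_iota.
  case: (find _ _) => [|[|k]] //=.
    by move/eqP => ->; left.
  case/orP; first by move/eqP => ->; left.
  by case/existsP => z /andP[/eqP -> zb] _; right.
rewrite hasNfind // size_iota => c1.
have c0 : (0 < #|V|)%N by apply/card_gt0P; exists a.
have cV : #|V| = 1%N by apply/eqP; rewrite eqn_leq c1 c0.
move: H; rewrite cV /= orbF => /eqP ab; left.
case: (eqVneq a b) => // /negbTE nab; exfalso.
have := max_card (mem [:: a; b]); rewrite (card_uniqP _) //= ?cV //.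
by rewrite inE nab.
Qed.

Lemma connect_ind (Q : V -> Prop) : (forall a b, adj P a b -> Q a -> Q b) ->
  forall x y, Q x -> Q y.
Proof.
move=> HQ x y Qx; have /connectP[p pth ->] := conn x y.
elim: p x Qx pth => [|b p IH] x Qx //= /andP[xb pth].
by apply: (IH b) => //; apply: (HQ x).
Qed.
End Comb.

Section Ana.
Variables (R : realType) (V : finType) (P : V -> V -> R) (m : V -> R).
Hypothesis P_ge0 : forall x y, 0 <= P x y.
Hypothesis P_stoch : forall x, \sum_(y : V) P x y = 1.
Hypothesis m_ge0 : forall x, 0 <= m x.
Hypothesis m_rev : forall x y, m x * P x y = m y * P y x.

Definition lnf (g : V -> R) := fun z => ln (g z).
Definition Aterm (g : V -> R) z := lap P (lnf g) z + lap P g z / g z.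
Definition cc (a' b' : R) := (ln a' - ln b') - (b' - a') / a'.

Lemma kl_ineq {p q : R} : 0 < p -> 0 < q -> p - q <= p * (ln p - ln q).
Proof.
move=> p0 q0.
have h : ln q - ln p <= q / p - 1.
  have := @le_ln1Dx R (q / p - 1); rewrite [1 + _]addrC subrK ln_div ?posrE //; apply.
  by rewrite ltrBrDl subrr divr_gt0.
have e : q / p * p = q by rewrite mulfVK // gt_eqF.
nra.
Qed.

Lemma kl_strict {p q : R} : 0 < p -> 0 < q -> p != q -> p - q < p * (ln p - ln q).
Proof.
move=> p0 q0 pq.
have h : 1 + (ln q - ln p) < q / p.
  have -> : q / p = expR (ln q - ln p) by rewrite -ln_div ?posrE // lnK // posrE divr_gt0.
  apply: expR_gt1Dx; rewrite subr_eq0; apply/negP => /eqP/ln_inj.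
  by rewrite !posrE => /(_ q0 p0) qp; move: pq; rewrite qp eqxx.
have e : q / p * p = q by rewrite mulfVK // gt_eqF.
nra.
Qed.

Lemma swap (F : V -> V -> R) :
  \sum_z \sum_w m z * P z w * F z w = \sum_z \sum_w m z * P z w * F w z.
Proof.
rewrite exchange_big; apply: eq_bigr => z _; apply: eq_bigr => w _ /=.
by rewrite m_rev.
Qed.

Lemma energy_sym g w : energy P m g w =
  2^-1 * \sum_z \sum_y m z * P z y * ((g y - g z) * (w y - w z)).
Proof.
rewrite /energy /inner /lap.
set S1 := \sum_z \sum_y m z * P z y * ((g y - g z) * w z).
have h1 : \sum_x (\sum_z P x z * (g z - g x)) * w x * m x = S1.
  apply: eq_bigr => x _; rewrite !big_distrl; apply: eq_bigr => z _ /=; ring.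
have h2 : \sum_z \sum_y m z * P z y * ((g y - g z) * (w y - w z)) =
   \sum_z \sum_y m z * P z y * ((g y - g z) * w y) - S1.
  rewrite -sumrB; apply: eq_bigr => x _; rewrite -sumrB; apply: eq_bigr => z _; ring.
have h3 : \sum_z \sum_y m z * P z y * ((g y - g z) * w y) = - S1.
  rewrite (swap (fun a b => (g b - g a) * w b)) /= /S1 -sumrN; apply: eq_bigr => x _.
  rewrite -sumrN; apply: eq_bigr => z _; ring.
by rewrite h1 h2 h3; field.
Qed.

Lemma prod_ln_ge0 (a b : R) : 0 < a -> 0 < b -> 0 <= (b - a) * (ln b - ln a).
Proof.
move=> a0 b0; have [ab|ba] := lerP a b.
  by apply: mulr_ge0; [rewrite subr_ge0 | rewrite subr_ge0 ler_ln ?posrE].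
by apply: mulr_le0; [rewrite subr_le0 ltW | rewrite subr_le0 ler_ln ?posrE // ltW].
Qed.

Lemma E_ge0 g : (forall z, 0 < g z) -> 0 <= energy P m g (lnf g).
Proof.
move=> gp; rewrite energy_sym; apply: mulr_ge0; first by rewrite invr_ge0.
apply: sumr_ge0 => z _; apply: sumr_ge0 => y _.
by apply: mulr_ge0; [apply: mulr_ge0|apply: prod_ln_ge0].
Qed.

Lemma psi_conv (a b a' b' : R) : 0 < a -> 0 < b -> 0 < a' -> 0 < b' ->
  cc a' b' * (a - a') + cc b' a' * (b - b') <=
  (b - a) * (ln b - ln a) - (b' - a') * (ln b' - ln a').
Proof.
move=> a0 b0 a'0 b'0.
set X := b' / a'; set Y := a' / b'.
have X0 : 0 < X by rewrite divr_gt0.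
have Y0 : 0 < Y by rewrite divr_gt0.
have h1 := kl_ineq a0 (mulr_gt0 b0 Y0).
have h2 := kl_ineq b0 (mulr_gt0 a0 X0).
rewrite lnM ?posrE // ln_div ?posrE // in h1.
rewrite lnM ?posrE // ln_div ?posrE // in h2.
have t1 : (b' - a') / a' * (a - a') = a * X - b' - a + a'.
  by rewrite /X; field; rewrite gt_eqF.
have t2 : (a' - b') / b' * (b - b') = b * Y - a' - b + b'.
  by rewrite /Y; field; rewrite gt_eqF.
rewrite /cc.
lra.
Qed.

Lemma sum_Aterm g z : (0 < g z) ->
  \sum_w P z w * cc (g z) (g w) = - Aterm g z.
Proof.
move=> gz; rewrite /Aterm /lap /lnf /cc big_distrl -big_split -sumrN.
by apply: eq_bigr => w _ /=; field; rewrite gt_eqF.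
Qed.

Lemma E_conv g g' : (forall z, 0 < g z) -> (forall z, 0 < g' z) ->
  energy P m g' (lnf g') - energy P m g (lnf g) <=
  - \sum_z m z * (g' z - g z) * Aterm g' z.
Proof.
move=> gp g'p; rewrite !energy_sym /lnf.
set C := \sum_z \sum_w m z * P z w * (cc (g' z) (g' w) * (g z - g' z)).
have hC : C = - \sum_z m z * (g z - g' z) * Aterm g' z.
  rewrite /C -sumrN; apply: eq_bigr => z _.
  have hA := sum_Aterm (g'p z).
  transitivity (m z * (g z - g' z) * \sum_w P z w * cc (g' z) (g' w)).
    by rewrite mulr_sumr; apply: eq_bigr => w _; ring.
  by rewrite hA; ring.
have hle : C + C <= \sum_z \sum_w m z * P z w * ((g w - g z) * (ln (g w) - ln (g z))) -
  \sum_z \sum_w m z * P z w * ((g' w - g' z) * (ln (g' w) - ln (g' z))).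
  rewrite {2}/C (swap (fun a b => cc (g' a) (g' b) * (g a - g' a))) /=.
  rewrite /C -!sumrB -big_split /=; apply: ler_sum => z _.
  rewrite -!sumrB -big_split /=; apply: ler_sum => w _.
  rewrite -!mulrBr -mulrDr; apply: ler_wpM2l; first by apply: mulr_ge0.
  by apply: psi_conv.
have -> : \sum_z m z * (g' z - g z) * Aterm g' z = - \sum_z m z * (g z - g' z) * Aterm g' z.
  by rewrite -sumrN; apply: eq_bigr => z _; ring.
rewrite -hC.
lra.
Qed.

Lemma Ent_conv g g' : (forall z, 0 < g z) -> (forall z, 0 < g' z) ->
  \sum_z m z * (g' z - g z) * (ln (g z) + 1) <= Ent m g' - Ent m g.
Proof.
move=> gp g'p; rewrite /Ent /inner -sumrB; apply: ler_sum => z _.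
have := kl_ineq (g'p z) (gp z).
have := m_ge0 z; nra.
Qed.

End Ana.

Section Cont.
Variables (R : realType) (V : finType) (P : V -> V -> R) (m : V -> R).
Variables (T : Type) (FF : set_system T).
Hypothesis FFf : Filter FF.
Variables (G : T -> V -> R) (g0 : V -> R).
Hypothesis Gc : forall z, G p z @[p --> FF] --> g0 z.
Hypothesis g0p : forall z, 0 < g0 z.

Lemma cvg_lap x : lap P (G p) x @[p --> FF] --> lap P g0 x.
Proof.
rewrite /lap; apply: cvg_big => [|z _]; first exact: add_continuous.
apply: cvgM; first exact: cvg_cst.
by apply: cvgB; apply: Gc.
Qed.

Lemma cvg_ln z : ln (G p z) @[p --> FF] --> ln (g0 z).
Proof.
exact: (cvg_comp _ _ (@Gc z) (continuous_ln (@g0p z))).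
Qed.

Lemma cvg_lapln x : lap P (fun z => ln (G p z)) x @[p --> FF] --> lap P (fun z => ln (g0 z)) x.
Proof.
rewrite /lap; apply: cvg_big => [|z _]; first exact: add_continuous.
apply: cvgM; first exact: cvg_cst.
by apply: cvgB; apply: cvg_ln.
Qed.
Lemma cvg_A x : Aterm P (G p) x @[p --> FF] --> Aterm P g0 x.
Proof.
rewrite /Aterm /lnf; apply: cvgD; first exact: cvg_lapln.
apply: cvgM; first exact: cvg_lap.
by apply: cvgV; [rewrite gt_eqF | exact: @Gc].
Qed.

Lemma cvg_F (al : R) : energy P m (G p) (lnf (G p)) - al * Ent m (G p) @[p --> FF]
   --> energy P m g0 (lnf g0) - al * Ent m g0.
Proof.
rewrite /energy /Ent /inner /lnf; apply: cvgB; last apply: cvgM; first apply: cvgN.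
- apply: cvg_big => [|z _]; first exact: add_continuous.
  apply: cvgM; last exact: cvg_cst.
  by apply: cvgM; [exact: cvg_lap | exact: cvg_ln].
- exact: cvg_cst.
- apply: cvg_big => [|z _]; first exact: add_continuous.
  apply: cvgM; last exact: cvg_cst.
  by apply: cvgM; [exact: Gc | exact: cvg_ln].
Qed.
Lemma cvg_lin (c : V -> R) : \sum_z c z * G p z @[p --> FF] --> \sum_z c z * g0 z.
Proof.
apply: cvg_big => [|z _]; first exact: add_continuous.
by apply: cvgM; [exact: cvg_cst | exact: Gc].
Qed.
End Cont.

Section Main.
Variables (R : realType) (V : finType) (P : V -> V -> R) (m : V -> R).
Hypothesis P_ge0 : forall x y, 0 <= P x y.
Hypothesis P_stoch : forall x, \sum_(y : V) P x y = 1.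
Hypothesis P_symsupp : forall x y, 0 < P x y -> 0 < P y x.
Hypothesis m_ge0 : forall x, 0 <= m x.
Hypothesis m_sum : \sum_(x : V) m x = 1.
Hypothesis m_rev : forall x y, m x * P x y = m y * P y x.
Hypothesis conn : forall x y, connect (adj P) x y.
Hypothesis sect : forall x y, adj P x y -> nonneg_sectional P x y.

Lemma m_gt0 x : 0 < m x.
Proof.
rewrite lt_neqAle m_ge0 andbT; apply/negP => /eqP m0.
have all0 : forall y, m y = 0.
  move=> y; apply: (@connect_ind R V P conn (fun a => m a = 0) _ x y (esym m0)).
  move=> a b ab ma.
  have Pba : 0 < P b a by apply: P_symsupp; case/andP: ab.
  have : m b * P b a = 0 by rewrite -m_rev ma mul0r.
  by move/eqP; rewrite mulf_eq0 (gt_eqF Pba) orbF => /eqP.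
by move: m_sum; rewrite big1 // => /esym/eqP; rewrite oner_eq0.
Qed.

Lemma sum_delta (c : V -> R) x : \sum_z (z == x)%:R * c z = c x.
Proof.
rewrite (bigD1 x) //= eqxx mul1r big1 ?addr0 // => z /negbTE ->.
by rewrite mul0r.
Qed.

Lemma Ent_pos f : (forall z, 0 < f z) -> \sum_z m z * f z = 1 ->
  (exists x y, f x != f y) -> 0 < Ent m f.
Proof.
move=> fp f1 [x [y fxy]].
have [z fz] : exists z, f z != 1.
  case: (eqVneq (f x) 1) => [fx1|fx1]; last by exists x.
  by exists y; rewrite -fx1 eq_sym.
have e0 : \sum_w m w * (f w - 1) = 0.
  rewrite (eq_bigr (fun w => m w * f w - m w)); last by move=> w _; ring.
  by rewrite sumrB f1 m_sum subrr.
rewrite -e0 /Ent /inner (bigD1 z) //= [X in _ < X](bigD1 z) //=.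
apply: ltr_leD.
  have := kl_strict (fp z) ltr01 fz; rewrite ln1 subr0 => h.
  have := m_gt0 z; nra.
apply: ler_sum => w _; have := kl_ineq (fp w) ltr01; rewrite ln1 subr0 => h.
have := m_ge0 w; nra.
Qed.

Lemma kappa_le x y g : adj P x y -> lip1 P g -> g y - g x = 1 ->
  kappa P x y <= lap P g x - lap P g y.
Proof.
move=> xy lg gxy; rewrite /kappa.
have d1 : (dist P x y)%:R = 1 :> R by rewrite (dist_adj xy).
set S := [set r | _].
have lapb : forall f, lip1 P f -> forall z, `|lap P f z| <= #|V|%:R.
  move=> f lf z; rewrite /lap (le_trans (ler_norm_sum _ _ _)) //.
  apply: le_trans (_ : \sum_w P z w * #|V|%:R <= _); last by rewrite -big_distrl /= P_stoch mul1r.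
  apply: ler_sum => w _; rewrite normrM ger0_norm //; apply: ler_wpM2l => //.
  by rewrite distrC (le_trans (lf _ _)) // ler_nat dist_le_card.
have hS : has_lbound S.
  exists (- (#|V|%:R + #|V|%:R)) => r [f [lf [_ ->]]].
  rewrite d1 divr1.
  have := lapb f lf x; have := lapb f lf y.
  rewrite !ler_norml => /andP[h1 h2] /andP[h3 h4]; lra.
apply: (ge_inf hS); exists g; split => //; split; first by rewrite gxy d1.
by rewrite d1 divr1.
Qed.


Definition K0 := inf [set r : R | exists x y, adj P x y /\ r = kappa P x y].

Lemma K0_le x y : adj P x y -> K0 <= kappa P x y.
Proof.
move=> xy; apply: ge_inf; last by exists x, y.
exists (- \sum_a \sum_b `|kappa P a b|) => r [a [b [_ ->]]].
have h1 : `|kappa P a b| <= \sum_b' `|kappa P a b'|.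
  rewrite (bigD1 b) //=.
  have : 0 <= \sum_(i | i != b) `|kappa P a i| by apply: sumr_ge0.
  lra.
have h2 : \sum_b' `|kappa P a b'| <= \sum_a' \sum_b' `|kappa P a' b'|.
  rewrite [X in _ <= X](bigD1 a) //=.
  have : 0 <= \sum_(i | i != a) \sum_b' `|kappa P i b'|.
    by apply: sumr_ge0 => i _; apply: sumr_ge0.
  lra.
have h0 : - kappa P a b <= `|kappa P a b| by rewrite -normrN ler_norm.
lra.
Qed.

Lemma coupling_ge0 g x y : adj P x y -> (forall z, 0 < g z) ->
  (forall a b, adj P a b -> ln (g b) - ln (g a) <= ln (g y) - ln (g x)) ->
  0 <= lap P g x / g x - lap P g y / g y.
Proof.
move=> xy gp H.
have [pi [pi0 [pix [piy pid]]]] := sect xy.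
have L0 : 0 <= ln (g y) - ln (g x).
  by have := H _ _ (adj_sym P_symsupp xy); lra.
have e1 : forall z, lap P g z / g z = \sum_a P z a * (g a / g z) - 1.
  move=> z; rewrite /lap big_distrl -[1](P_stoch z) -sumrB.
  by apply: eq_bigr => a _ /=; field; rewrite gt_eqF.
rewrite !e1.
have ex : \sum_a P x a * (g a / g x) = \sum_a \sum_b pi a b * (g a / g x).
  by apply: eq_bigr => a _; rewrite -pix big_distrl.
have ey : \sum_b P y b * (g b / g y) = \sum_a \sum_b pi a b * (g b / g y).
  by rewrite exchange_big; apply: eq_bigr => b _; rewrite -piy big_distrl.
rewrite ex ey subr_ge0 lerD2r.
apply: ler_sum => a _; apply: ler_sum => b _.
have [->|pnz] := eqVneq (pi a b) 0; first by rewrite !mul0r.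
have ppos : 0 < pi a b by rewrite lt_neqAle eq_sym pnz pi0.
apply: ler_wpM2l; first exact: pi0.
have ediv : forall c d : R, 0 < c -> 0 < d -> c / d = expR (ln c - ln d).
  by move=> c d c0 d0; rewrite -ln_div ?posrE // lnK // posrE divr_gt0.
rewrite !ediv // ler_expR.
case: (dist_le1 (pid _ _ ppos)) => [<-|ab]; first lra.
by have := H _ _ ab; lra.
Qed.

Lemma lap_scale (w : V -> R) c z : lap P (fun a => w a / c) z = lap P w z / c.
Proof.
by rewrite /lap big_distrl; apply: eq_bigr => a _ /=; rewrite -mulrBl mulrA.
Qed.

Lemma lap_const c z : lap P (fun _ => c) z = 0.
Proof. by rewrite /lap big1 // => a _; rewrite subrr mulr0. Qed.


Lemma sum_if (c : V -> R) x : \sum_z (if z == x then c z else 0) = c x.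
Proof.
rewrite (bigD1 x) //= eqxx big1 ?addr0 // => z /negbTE ->; done.
Qed.

Lemma arith1 (t al L A EG EGs NG NGs lx ly : R) : 0 < t -> 0 <= al -> L = ly - lx ->
  EGs - al * NGs <= EG - al * NG -> EG - EGs <= - (t * A) ->
  t * ((lx + 1) - (ly + 1)) <= NG - NGs -> A <= al * L.
Proof.
move=> t0 al0 -> h1 h2 h3.
have h4 := ler_wpM2l al0 h3.
have : t * A <= t * (al * (ly - lx)) by lra.
by rewrite ler_pM2l.
Qed.

Definition Fa (al : R) (g : V -> R) := energy P m g (lnf g) - al * Ent m g.

Import ArrowAsProduct.

Lemma main_ineq (al : R) : 0 <= al -> al < K0 ->
  forall f : V -> R, (forall z, 0 < f z) -> \sum_z m z * f z = 1 -> 0 <= Fa al f.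
Proof.
move=> al0 alK f fp f1.
rewrite leNgt; apply/negP => Ff.
pose dl := (1 + \sum_z (f z)^-1)^-1.
have Sp : 0 <= \sum_z (f z)^-1 by apply: sumr_ge0 => z _; rewrite invr_ge0 ltW.
have dl0 : 0 < dl by rewrite invr_gt0; lra.
have dlf : forall z, dl <= f z.
  move=> z; rewrite /dl -[f z]invrK lef_pV2 ?posrE ?invr_gt0 //; last lra.
  rewrite (bigD1 z) //=.
  have : 0 <= \sum_(i | i != z) (f i)^-1 by apply: sumr_ge0 => i _; rewrite invr_ge0 ltW.
  lra.
pose B := [set g : V -> R | forall z, `[dl, (m z)^-1] (g z)].
pose C := [set g : V -> R | \sum_z m z * g z = 1].
pose S := B `&` C.
have inS : forall g : V -> R, (forall z, dl <= g z) -> \sum_z m z * g z = 1 -> S g.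
  move=> g gd g1; split => //= z.
  change (g z \in `[dl, (m z)^-1]%R); rewrite in_itv /= gd /=.
  have mz := m_gt0 z.
  rewrite -(ler_pM2l mz) mulfV ?gt_eqF // -g1 (bigD1 z) //=.
  have : 0 <= \sum_(i | i != z) m i * g i.
    by apply: sumr_ge0 => i _; apply: mulr_ge0 => //; apply: le_trans (ltW dl0) (gd i).
  lra.
have Bc : compact B by exact: (@tychonoff V (fun _ => R) (fun z => `[dl, (m z)^-1]) (fun z => @segment_compact R dl (m z)^-1)).
have Cc : closed C.
  have -> : C = (fun g : V -> R => \sum_z m z * g z) @^-1` [set x | x = 1] by [].
  apply: preimage_closed; last exact: closed_eq.
  move=> g _.
  exact: (@cvg_lin R V (V -> R) (nbhs g) _ (fun p => p) g (fun z => @proj_continuous V (fun _ => R) z g) m).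
have Sc : compact S by apply: compact_closedI.
have S0 : S !=set0 by exists f; apply: inS.
have Fc : {within S, continuous (Fa al)}.
  apply: continuous_in_subspaceT => g /set_mem [gB _].
  have gp : forall z, 0 < g z.
    move=> z; have := gB z; change (g z \in `[dl, (m z)^-1]%R -> 0 < g z).
    by rewrite in_itv /= => /andP[h _]; exact: lt_le_trans dl0 h.
  exact: (@cvg_F R V P m _ (nbhs g) _ (fun p => p) g (fun z => @proj_continuous V (fun _ => R) z g) gp al).
have [gs gsS gsmin] := compact_EVT_min S0 Sc Fc.
have [gsB gs1] := set_mem gsS.
have gsd : forall z, dl <= gs z.
  by move=> z; have := gsB z; change (gs z \in `[dl, (m z)^-1]%R -> dl <= gs z); rewrite in_itv /= => /andP[].
have gsp : forall z, 0 < gs z by move=> z; exact: lt_le_trans dl0 (gsd z).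
have Fgs : Fa al gs < 0 by apply: le_lt_trans (gsmin f _) Ff; apply: mem_set; apply: inS.
pose u := lnf gs.
have [[a b] /andP[/= ab uab]] : exists p : V * V, adj P p.1 p.2 && (0 < u p.2 - u p.1).
  case: (boolP [exists p : V * V, adj P p.1 p.2 && (0 < u p.2 - u p.1)]) => [/existsP //|].
  rewrite negb_exists => /forallP Hn.
  have Hle : forall a b, adj P a b -> u b - u a <= 0.
    by move=> a b ab; have := Hn (a, b); rewrite /= ab /= -leNgt.
  have hc := dist_bound P_symsupp conn (lexx 0) Hle.
  have geq : forall z w, gs z = gs w.
    move=> z w; have := hc z w; rewrite mulr0 normr_le0 subr_eq0 => /eqP.
    by move/ln_inj; apply; rewrite posrE.
  have g1 : forall z, gs z = 1.
    move=> z; rewrite -gs1 (eq_bigr (fun w => m w * gs z)) => [|w _]; last by rewrite (geq w z).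
    by rewrite -big_distrl /= m_sum mul1r.
  have lnz : forall z, ln (gs z) = 0 by move=> z; rewrite g1 ln1.
  have : Fa al gs = 0.
    rewrite /Fa /energy /Ent /inner /lnf !big1 ?oppr0 ?mulr0 ?subr0 // => z _;
      by rewrite lnz mulr0 mul0r.
  by move=> F0; move: Fgs; rewrite F0 ltxx.
case: (@arg_maxP _ _ _ (a, b) (fun p : V * V => adj P p.1 p.2) (fun p : V * V => u p.2 - u p.1) ab) => [[x y] /= xy Hmax].
pose L := u y - u x.
have HL : forall a b, adj P a b -> u b - u a <= L by move=> a' b' h; exact: (Hmax (a', b') h).
have L0 : 0 < L by have := HL _ _ ab; lra.
pose g := fun z => u z / L.
have lipg : lip1 P g.
  move=> a' b'; rewrite /g -mulrBl normrM [`|L^-1|]gtr0_norm ?invr_gt0 // ler_pdivrMr //.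
  exact: (dist_bound P_symsupp conn (ltW L0) HL).
have gxy : g y - g x = 1 by rewrite /g -mulrBl mulfV // gt_eqF.
have hk := kappa_le xy lipg gxy.
rewrite /g !lap_scale -mulrBl in hk.
have hK := K0_le xy.
have hcoup := coupling_ge0 xy gsp HL.
have xny : x != y := adj_neq xy.
have gxy' : gs x < gs y by rewrite -ltr_ln ?posrE //; rewrite /L /u /lnf in L0; lra.
pose h := fun z : V => (if z == x then (m x)^-1 else 0) - (if z == y then (m y)^-1 else 0).
pose gt := fun (t : R) (z : V) => gs z + t * h z.
pose t0 := m y * (gs y - dl).
have t00 : 0 < t0 by rewrite /t0 mulr_gt0 ?m_gt0 // subr_gt0 (le_lt_trans (gsd x) gxy').
have sum_h : forall c : V -> R, \sum_z m z * h z * c z = c x - c y.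
  move=> c; rewrite (eq_bigr (fun z => (if z == x then m z * (m x)^-1 * c z else 0)
     - (if z == y then m z * (m y)^-1 * c z else 0))); last first.
    by move=> z _; rewrite /h; case: ifP; case: ifP => _ _; ring.
  rewrite sumrB !sum_if !mulfV ?mul1r // ?gt_eqF ?m_gt0 //.
have hx : h x = (m x)^-1 by rewrite /h eqxx (negbTE xny) subr0.
have hy : h y = - (m y)^-1 by rewrite /h eqxx eq_sym (negbTE xny) sub0r.
have hz : forall z, z != x -> z != y -> h z = 0.
  by move=> z /negbTE zx /negbTE zy; rewrite /h zx zy subrr.
have bound_t : forall t, 0 < t -> t < t0 -> Aterm P (gt t) x - Aterm P (gt t) y <= al * L.
  move=> t tp tt0.
  have gtd : forall z, dl <= gt t z.
    move=> z; rewrite /gt.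
    case: (eqVneq z x) => [->|zx].
      rewrite hx.
      have : 0 <= t * (m x)^-1 by apply: mulr_ge0; [exact: ltW | rewrite invr_ge0; exact: ltW (m_gt0 x)].
      have := gsd x; lra.
    case: (eqVneq z y) => [->|zy]; last by rewrite hz // mulr0 addr0.
    rewrite hy mulrN.
    have my0 := m_gt0 y.
    have : t * (m y)^-1 <= gs y - dl.
      by rewrite ler_pdivrMr // mulrC ltW.
    lra.
  have gtp : forall z, 0 < gt t z by move=> z; exact: lt_le_trans dl0 (gtd z).
  have gt1 : \sum_z m z * gt t z = 1.
    rewrite /gt (eq_bigr (fun z => m z * gs z + t * (m z * h z * 1))); last by move=> z _; ring.
    by rewrite big_split /= gs1 -mulr_sumr (sum_h (fun _ => 1)) subrr mulr0 addr0.
  have hF : Fa al gs <= Fa al (gt t) by apply: gsmin; apply: mem_set; apply: inS.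
  have hE := E_conv P_ge0 m_ge0 m_rev gsp gtp.
  have hEnt := Ent_conv m_ge0 gsp gtp.
  have e1 : \sum_z m z * (gt t z - gs z) * Aterm P (gt t) z = t * (Aterm P (gt t) x - Aterm P (gt t) y).
    rewrite -sum_h mulr_sumr; apply: eq_bigr => z _; rewrite /gt; ring.
  have e2 : \sum_z m z * (gt t z - gs z) * (ln (gs z) + 1) = t * ((ln (gs x) + 1) - (ln (gs y) + 1)).
    rewrite -(sum_h (fun z => ln (gs z) + 1)) mulr_sumr; apply: eq_bigr => z _; rewrite /gt; ring.
  rewrite e1 in hE; rewrite e2 in hEnt.
  rewrite /Fa in hF.
  exact: (arith1 tp al0 (erefl L) hF hE hEnt).
have Gc : forall z, gt t z @[t --> 0^'+] --> gs z.
  move=> z; apply: cvg_at_right_filter; rewrite /gt.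
  suff : gs z + t * h z @[t --> 0] --> gs z + 0 * h z by rewrite mul0r addr0.
  apply: cvgD; first exact: cvg_cst.
  by apply: cvgMr_tmp; exact: cvg_id.
have lim : (fun t => Aterm P (gt t) x - Aterm P (gt t) y) @ 0^'+ --> Aterm P gs x - Aterm P gs y.
  apply: cvgB; [exact: (@cvg_A R V P R (0^'+) _ gt gs Gc gsp x) | exact: (@cvg_A R V P R (0^'+) _ gt gs Gc gsp y)].
have near_b : \forall t \near 0^'+, Aterm P (gt t) x - Aterm P (gt t) y <= al * L.
  near=> t; apply: bound_t; near: t; [exact: nbhs_right_gt | exact: nbhs_right_lt].
have hA := closed_cvg _ (@closed_le R (al * L)) near_b _ lim.
have {}hA := hA (at_right_proper_filter 0).
have eA : Aterm P gs x - Aterm P gs y = (lap P u x - lap P u y) + (lap P gs x / gs x - lap P gs y / gs y).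
  by rewrite /Aterm /u; ring.
have hk' : kappa P x y * L <= lap P u x - lap P u y by rewrite -ler_pdivlMr.
have : kappa P x y * L <= al * L.
  apply: (le_trans hk'); apply: le_trans hA; rewrite eA lerDl; exact: hcoup.
rewrite ler_pM2r // => kal.
lra.
Unshelve. all: by end_near.
Qed.

End Main.

Unset Implicit Arguments.

Theorem theorem4p4 (R : realType) (V : finType) (P : V -> V -> R) (m : V -> R)
  (P_ge0 : forall x y, 0 <= P x y)
  (P_stoch : forall x, \sum_(y : V) P x y = 1)
  (P_lazy : forall x, 2^-1 <= P x x)
  (P_symsupp : forall x y, 0 < P x y -> 0 < P y x)
  (m_ge0 : forall x, 0 <= m x)
  (m_sum : \sum_(x : V) m x = 1)
  (m_rev : forall x y, m x * P x y = m y * P y x)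
  (conn : forall x y, connect (adj P) x y)
  (sect : forall x y, adj P x y -> nonneg_sectional P x y) :
  inf [set r : R | exists x y, adj P x y /\ r = kappa P x y]
    <= alpha_mod P m.
Proof.
rewrite /alpha_mod.
set SA := [set r : R | exists f : V -> R, _].
have hK : inf [set r : R | exists x y, adj P x y /\ r = kappa P x y] = K0 P by [].
rewrite hK.
case: (pselect (SA !=set0)) => [ne|emp].
  apply: lb_le_inf => // r [f [fp [f1 [nc ->]]]].
  have f1' : \sum_z m z * f z = 1.
    by rewrite -f1 /inner; apply: eq_bigr => z _; rewrite mulr1 mulrC.
  have Ep := Ent_pos P_symsupp m_ge0 m_sum m_rev conn fp f1' nc.
  have E0 := E_ge0 P_ge0 m_ge0 m_rev fp.
  rewrite /lnf in E0.
  rewrite leNgt; apply/negP => lt.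
  set q := energy P m f (fun x => ln (f x)) / Ent m f in lt.
  have q0 : 0 <= q by rewrite /q divr_ge0 // ltW.
  pose al := (q + K0 P) / 2.
  have al0 : 0 <= al by rewrite /al divr_ge0 //; lra.
  have alK : al < K0 P by rewrite /al; lra.
  have := main_ineq P_ge0 P_stoch P_symsupp m_ge0 m_sum m_rev conn sect al0 alK fp f1'.
  rewrite /Fa /lnf subr_ge0 => h.
  have : al <= q by rewrite /q ler_pdivlMr.
  rewrite /al; lra.
have -> : SA = set0.
  by apply/seteqP; split => // r hr; apply: emp; exists r.
rewrite inf0.
case: (pselect ([set r : R | exists x y, adj P x y /\ r = kappa P x y] !=set0)) => [[r [x [y [xy _]]]]|emK].
  exfalso; apply: emp.
  have mx := m_gt0 P_symsupp m_ge0 m_sum m_rev conn x.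
  pose f := fun z : V => (if z == x then 2 else 1) / (1 + m x).
  exists (energy P m f (fun z => ln (f z)) / Ent m f), f; split.
    by move=> z; rewrite /f divr_gt0 //; [case: ifP | lra].
  split.
    rewrite /inner /f.
    rewrite (eq_bigr (fun z => (m z + (if z == x then m z else 0)) / (1 + m x))); last first.
      by move=> z _; case: ifP => _; ring.
    rewrite -big_distrl /= big_split /= m_sum sum_if mulfV //; lra.
  have yx : (y == x) = false by rewrite eq_sym (negbTE (adj_neq xy)).
  split => //; exists x, y; rewrite /f eqxx yx.
  apply/negP => /eqP h; have : (2 : R) = 1.
    by move: h; move/(congr1 (fun t => t * (1 + m x))); rewrite !mulfVK //; lra.
  lra.
rewrite /K0.
have -> : [set r : R | exists x y, adj P x y /\ r = kappa P x y] = set0.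
  by apply/seteqP; split => // r hr; apply: emK; exists r.
by rewrite inf0.
Qed.
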